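(* Let $\theta$ be a random variable with a continuous distribution, let $u(q,\theta)$ be a utility function, monotone increasing in $q$, with $\partial^2u(q,\theta)/\partial q^2=-1/d$ for all $(q,\theta)$, where $d>0$. Let $\lambda>0$, $\epsilon>0$ and let the penalty with deadband be $$\phi(x)=\begin{cases}\dfrac{(|x|-\epsilon)^2}{2\lambda}, & |x|\ge\epsilon,\\ 0, & \text{otherwise.}\end{cases}$$ Let $\pi_0>0$, $\pi_2>0$, $p\in(0,1)$. Define $q^a(\theta)=\arg\min_q\{\pi_0 q-u(q,\theta)\}$, $q^b(f,\theta)=\arg\min_q\{\pi_0 q-u(q,\theta)+\phi(f-q)\}$, $q^c(\theta)=\arg\min_q\{\pi_0 q-u(q,\theta)-\pi_2(f-q)\}$, $$H(f)=p\,\mathbb{E}_\theta[\pi_0 q^c-u(q^c,\theta)-\pi_2(f-q^c)]+(1-p)\,\mathbb{E}_\theta[\pi_0 q^b-u(q^b,\theta)+\phi(f-q^b)],$$ and let $f^*$ be the optimal baseline report (minimizer of $H$). Suppose $q^a(\theta)\in[q_{\min},q_{\max}]$ for all $\theta$ and $\max\{q_{\max}-\mathbb{E}_\theta q^a(\theta),\ \mathbb{E}_\theta q^a(\theta)-q_{\min}\}\le\epsilon$. Then the expected inflation of the baseline report satisfies $$\mathbb{E}_\theta\,\delta f^*(p)=f^*-\mathbb{E}_\theta q^a(\theta)\le(d+\lambda)\frac{p\,\pi_2}{1-p}+\epsilon,$$ and the mechanism is individually rational.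
   Context: A consumer in a demand response program self-reports baseline $f$; with probability $p$ it is called and paid $\pi_2$ per unit of reduction $f-q$, otherwise it pays the penalty $\phi(f-q)$. $\pi_0$ is the retail price and $q^a(\theta)$ is the consumption when not participating (true baseline). Individual rationality means that the consumer's minimal expected cost when participating with its optimal report, $H(f^* )$, is no larger than its expected cost when not participating, $\mathbb{E}_\theta[\pi_0 q^a(\theta)-u(q^a(\theta),\theta)]$. *)

(* Defs.v *)
From HB Require Import structures.
From mathcomp Require Import all_boot all_order all_algebra.
From mathcomp Require Import all_classical all_reals all_analysis.
Set Implicit Arguments. Unset Strict Implicit. Unset Printing Implicit Defensive.
Import Order.TTheory GRing.Theory Num.Theory.
Local Open Scope ring_scope.

Definition phi {R : realType} (lam eps x : R) : R :=
  if eps <= `|x| then (`|x| - eps) ^+ 2 / (2 * lam) else 0.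

(* Expected cost H(f) of the participating consumer who reports baseline f:
   with prob. p it is called (consumption qc f theta, paid pi2 per unit of
   reduction f - q), otherwise (consumption qb f theta) it pays phi(f - q). *)
Definition Hcost {d} {T : measurableType d} {R : realType}
  (P : probability T R) (th : T -> R) (u : R -> R -> R)
  (pi0 pi2 p lam eps : R) (qb qc : R -> R -> R) (f : R) : \bar R :=
  (p%:E * 'E_P[fun w => (pi0 * qc f (th w) - u (qc f (th w)) (th w)
                         - pi2 * (f - qc f (th w)))%R]
   + (1 - p)%:E * 'E_P[fun w => (pi0 * qb f (th w) - u (qb f (th w)) (th w)
                         + phi lam eps (f - qb f (th w)))%R])%E.

(* Main.v *)
Require Import Defs.
From HB Require Import structures.
From mathcomp Require Import all_boot all_order all_algebra.
From mathcomp Require Import all_classical all_reals all_analysis.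
From mathcomp Require Import ring lra measurable_realfun.
Import Order.TTheory GRing.Theory Num.Theory.
Local Open Scope ring_scope.
Local Open Scope classical_set_scope.


Lemma quad (R : realType) (v : R -> R) (k : R) :
  (forall q, derivable v q 1 /\ derivable (derive1 v) q 1 /\ derive1 (derive1 v) q = -k) ->
  forall q, v q = v 0 + (v 1 - v 0 + k/2) * q - k/2 * q^+2.
Proof.
move=> H.
have h1 : forall x, derive1 v x = derive1 v 0 - k * x.
  move=> x.
  have E : derive1 v x + k * x = derive1 v 0 + k * 0.
    apply: (@is_derive_0_is_cst R (fun y => derive1 v y + k * y)).
    move=> y; have [_ [dd e]] := H y.
    have D1 := derivableP dd; rewrite -derive1E e in D1.
    have D2 := is_deriveZ k (is_derive_id y (1:R)).
    have D3 := is_deriveD D1 D2.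
    have -> : (fun y0 : R => derive1 v y0 + k * y0) = (derive1 v + k \*: id).
      by apply/funext => z.
    apply: (is_derive_eq D3).
    by rewrite /= scaler1 addNr.
  lra.
set c := derive1 v 0 in h1.
have h2 : forall x, v x - c * x + k / 2 * x ^+ 2 = v 0 - c * 0 + k / 2 * 0 ^+ 2.
  move=> x.
  apply: (@is_derive_0_is_cst R (fun y => v y - c * y + k / 2 * y ^+ 2)).
  move=> y.
  have [dd _] := H y.
  have D1 := derivableP dd; rewrite -derive1E h1 in D1.
  have D2 := is_deriveZ c (is_derive_id y (1:R)).
  have D4 := is_deriveZ (k/2) (is_deriveX 2 (is_derive_id y (1:R))).
  have D3 := is_deriveD (is_deriveB D1 D2) D4.
  move: D3; set F := (X in is_derive _ _ X _) => D3.
  have -> : (fun y0 : R => v y0 - c * y0 + k / 2 * y0 ^+ 2) = F.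
    by apply/funext => z; rewrite /F /=.
  apply: (is_derive_eq D3).
  rewrite /= !scaler1 /GRing.scale /= expr1.
  by field.
move=> q.
have e1 := h2 1; have eq := h2 q.
rewrite !expr0n /= !mulr0 subr0 addr0 expr1n !mulr1 in e1 eq.
have ce : c = v 1 - v 0 + k / 2 by lra.
rewrite -ce -eq; ring.
Qed.


Lemma phi_ge0 (R : realType) (l eps x : R) : 0 < l -> 0 <= phi l eps x.
Proof.
move=> l0; rewrite /phi; case: ifP => // _.
by apply: divr_ge0; [exact: sqr_ge0 | lra].
Qed.

Lemma cs_ineq (R : realType) (l d a b : R) : 0 < l -> 0 < d ->
  (a + b)^+2 / (2 * (d + l)) <= a^+2 / (2 * d) + b^+2 / (2 * l).
Proof.
move=> l0 d0.
have E : a^+2 / (2 * d) + b^+2 / (2 * l) - (a + b)^+2 / (2 * (d + l))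
   = (a * l - b * d)^+2 / (2 * d * l * (d + l)).
  field; lra.
rewrite -subr_ge0 E; apply: divr_ge0; first exact: sqr_ge0.
apply: mulr_ge0; last lra.
apply: mulr_ge0; lra.
Qed.

Lemma phi_lb (R : realType) (l d eps x y : R) : 0 < l -> 0 < d -> 0 < eps ->
  phi (d + l) eps x <= (x - y)^+2 / (2 * d) + phi l eps y.
Proof.
move=> l0 d0 e0.
pose b := if eps <= `|y| then `|y| - eps else 0.
have hb : phi l eps y = b^+2 / (2 * l).
  by rewrite /phi /b; case: ifP => //; rewrite expr0n /= mul0r.
have b0 : 0 <= b by rewrite /b; case: ifP => //; lra.
have yb : `|y| <= eps + b.
  by rewrite /b; case: (leP eps `|y|) => h; lra.
rewrite hb /phi; case: (leP eps `|x|) => hx; last first.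
  by apply: addr_ge0; apply: divr_ge0; (exact: sqr_ge0 || lra).
have tri : `|x| <= `|x - y| + `|y|.
  by have := ler_normD (x - y) y; rewrite subrK.
have h1 : (`|x| - eps)^+2 <= (`|x - y| + b)^+2.
  have n0 : 0 <= `|x - y| by [].
  nra.
rewrite -[(x - y)^+2]real_normK ?num_real //.
apply: le_trans (@cs_ineq _ l d `|x - y| b l0 d0).
rewrite ler_pM2r; first exact: h1.
rewrite invr_gt0; lra.
Qed.

Lemma phi_attain (R : realType) (l d eps x : R) : 0 < l -> 0 < d -> 0 < eps ->
  exists y, (x - y)^+2 / (2 * d) + phi l eps y = phi (d + l) eps x.
Proof.
move=> l0 d0 e0.
have Dn : d + l != 0 by rewrite gt_eqF //; lra.
case: (lerP eps `|x|) => hx; last first.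
  exists x; rewrite /phi subrr expr0n /= mul0r add0r.
  by case: (leP eps `|x|) => h //; lra.
case: (lerP 0 x) => x0.
  rewrite ger0_norm // in hx.
  pose y := x - d * (x - eps) / (d + l).
  have ye : y - eps = l * (x - eps) / (d + l) by rewrite /y; field.
  have y0 : 0 <= y - eps by rewrite ye; apply: divr_ge0; [apply: mulr_ge0|]; lra.
  exists y; rewrite /phi ger0_norm ?(ger0_norm x0); last lra.
  case: (leP eps y) => h1; last lra.
  case: (leP eps x) => h2; last lra.
  rewrite ye /y; field; lra.
rewrite ltr0_norm // in hx.
pose y := x + d * (- x - eps) / (d + l).
have ye : - y - eps = l * (- x - eps) / (d + l) by rewrite /y; field.
have y0 : 0 <= - y - eps by rewrite ye; apply: divr_ge0; [apply: mulr_ge0|]; lra.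
exists y; rewrite /phi ler0_norm ?(ltr0_norm x0); last lra.
case: (leP eps (- y)) => h1; last lra.
case: (leP eps (- x)) => h2; last lra.
rewrite ye /y; field; lra.
Qed.

Lemma phi_conv (R : realType) (D eps x y : R) : 0 < D -> 0 < eps -> y <= x ->
  (x - y) * (y - eps) / D <= phi D eps x - phi D eps y.
Proof.
move=> D0 e0 yx.
have phE : forall z, phi D eps z =
   (if eps <= `|z| then (`|z| - eps)^+2 else 0) / (2 * D).
  by move=> z; rewrite /phi; case: ifP => //; rewrite mul0r.
suff H : 2 * ((x - y) * (y - eps)) <=
   (if eps <= `|x| then (`|x| - eps)^+2 else 0) - (if eps <= `|y| then (`|y| - eps)^+2 else 0).
  rewrite !phE -mulrBl.
  have -> : (x - y) * (y - eps) / D = (2 * ((x - y) * (y - eps))) / (2 * D).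
    by field; lra.
  rewrite ler_pM2r // invr_gt0; lra.
case: (lerP 0 x) => x0; [rewrite (ger0_norm x0) | rewrite (ltr0_norm x0)];
case: (lerP 0 y) => y0; [rewrite (ger0_norm y0) | rewrite (ltr0_norm y0) | rewrite (ger0_norm y0) | rewrite (ltr0_norm y0)];
case: (leP eps x) => h1 //; try case: (leP eps (-x)) => h1' //;
case: (leP eps y) => h2 //; try case: (leP eps (-y)) => h2' //; nra.
Qed.

Lemma argmin_q (R : realType) (d pi0 A B x : R) : 0 < d ->
  (forall q, pi0*x - (A + B*x - d^-1/2*x^+2) <= pi0*q - (A + B*q - d^-1/2*q^+2)) ->
  x = d * (B - pi0).
Proof.
move=> d0 H.
set q0 := d * (B - pi0).
have e0 : 0 < d^-1 by rewrite invr_gt0.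
have hB : B = d^-1 * q0 + pi0 by rewrite /q0 mulrA mulVf ?gt_eqF // mul1r; ring.
have := H q0; rewrite hB => H'.
have h2 : d^-1 * (x - q0)^+2 <= 0 by nra.
have h3 : (x - q0)^+2 <= 0.
  by move: h2; rewrite pmulr_rle0.
have h4 : (x - q0)^+2 = 0 by apply/eqP; rewrite eq_le h3 sqr_ge0.
by move/eqP: h4; rewrite sqrf_eq0 subr_eq0 => /eqP.
Qed.

Lemma key_gen (R : realType) (d pi0 A B x q : R) : 0 < d -> x = d * (B - pi0) ->
  pi0*q - (A + B*q - d^-1/2*q^+2) =
  (pi0*x - (A + B*x - d^-1/2*x^+2)) + (q - x)^+2 / (2 * d).
Proof.
move=> d0 hx.
have hB : B = d^-1 * x + pi0 by rewrite hx mulrA mulVf ?gt_eqF // mul1r; ring.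
rewrite hB; field; lra.
Qed.

Lemma c_gen (R : realType) (d G pi2 xa f z : R) : 0 < d ->
  G + (z - xa)^+2 / (2 * d) - pi2 * (f - z) <=
  G + ((xa - d * pi2) - xa)^+2 / (2 * d) - pi2 * (f - (xa - d * pi2)) ->
  G + (z - xa)^+2 / (2 * d) - pi2 * (f - z) = G + pi2 * xa - d * pi2^+2 / 2 - pi2 * f.
Proof.
move=> d0 H.
have E1 : G + ((xa - d * pi2) - xa)^+2 / (2 * d) - pi2 * (f - (xa - d * pi2))
   = G + pi2 * xa - d * pi2^+2 / 2 - pi2 * f by field; lra.
have E2 : G + (z - xa)^+2 / (2 * d) - pi2 * (f - z) -
   (G + pi2 * xa - d * pi2^+2 / 2 - pi2 * f) = (z - xa + d * pi2)^+2 / (2 * d)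
   by field; lra.
apply/eqP; rewrite eq_le; apply/andP; split; first by rewrite -E1.
rewrite -subr_ge0 E2.
by apply: divr_ge0; [exact: sqr_ge0 | lra].
Qed.


Section E.
Context (R : realType) (dsp : measure_display) (T : measurableType dsp) (P : probability T R).

Lemma E_lin (Y Z : T -> R) (a b : R) : Y \in Lfun P 1 -> Z \in Lfun P 1 ->
  ('E_P[fun w => (Y w + a * Z w + b)%R] = 'E_P[Y] + a%:E * 'E_P[Z] + b%:E)%E.
Proof.
move=> hY hZ.
have hZ' : (a \o* Z) \in Lfun P 1 by apply: Lfun_scale => //; rewrite lexx.
have E : (fun w => (Y w + a * Z w + b)%R) = (Y \+ a \o* Z) \+ cst b.
  by apply: boolp.funext => w /=; rewrite [Z w * a]mulrC.
rewrite E.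
rewrite expectationD; last exact: Lfun_cst.
  by rewrite expectationD // expectationZl // expectation_cst.
by apply: rpredD.
Qed.

Lemma E_le (Y Z : T -> R) : Y \in Lfun P 1 -> Z \in Lfun P 1 ->
  (forall w, Y w <= Z w) -> ('E_P[Y] <= 'E_P[Z])%E.
Proof.
move=> /Lfun1_integrable hY /Lfun1_integrable hZ YZ.
rewrite unlock; apply: le_integral => // w _; rewrite lee_fin; exact: YZ.
Qed.

Lemma E_fin (Y : T -> R) : Y \in Lfun P 1 -> ('E_P[Y] = (fine 'E_P[Y])%:E)%E.
Proof. by move=> hY; rewrite fineK // expectation_fin_num. Qed.

Lemma Lfun_bounded (Y : T -> R) (C : R) : measurable_fun setT Y ->
  (forall w, `|Y w| <= C) -> Y \in Lfun P 1.
Proof.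
move=> mY YC; apply/Lfun1_integrable.
apply: (@le_integrable _ _ _ P setT measurableT _ (EFin \o cst C)).
- exact/measurable_EFinP.
- move=> w _ /=; rewrite lee_fin.
  apply: le_trans (YC w) _; exact: ler_norm.
- exact: finite_measure_integrable_cst.
Qed.

Lemma Lfun_meas (Y : T -> R) : P.-integrable setT (fun w => (Y w)%:E) -> Y \in Lfun P 1.
Proof. by move=> h; apply/Lfun1_integrable. Qed.

Lemma Lfun_m (Y : T -> R) : Y \in Lfun P 1 -> measurable_fun setT Y.
Proof. by move=> /Lfun1_integrable /measurable_int /measurable_EFinP. Qed.


Lemma phiM (D eps : R) (Y : T -> R) : 0 < D -> measurable_fun setT Y ->
  measurable_fun setT (fun w => phi D eps (Y w)).
Proof.
move=> D0 mY.
have E : forall z : R, phi D eps z = ((`|z| - eps + `| `|z| - eps |) / 2)^+2 / (2*D).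
  move=> z; rewrite /phi; case: (leP eps `|z|) => h.
    rewrite [`| `|z| - eps |]ger0_norm; last lra.
    by congr (_ ^+ 2 / _); field.
  rewrite [`| `|z| - eps |]ltr0_norm; last lra.
  by rewrite addrN mul0r expr0n /= mul0r.
rewrite (_ : (fun w => phi D eps (Y w)) = (fun w => ((`|Y w| - eps + `| `|Y w| - eps |) / 2)^+2 / (2*D))); last first.
  by apply: boolp.funext => w; rewrite E.
have m1 : measurable_fun setT (fun w => `|Y w|) := measurableT_comp (@normr_measurable R setT) mY.
have m2 := measurable_funB m1 (measurable_cst eps).
have m3 := measurableT_comp (@normr_measurable R setT) m2.
have m4 := measurable_funD m2 m3.
have m5 := measurable_funM m4 (measurable_cst (2^-1 : R)).
have m6 := measurable_funX 2 m5.
exact: (measurable_funM m6 (measurable_cst ((2*D)^-1 : R))).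
Qed.

Lemma Lfun_lin2 (Y Z : T -> R) (a c b : R) : Y \in Lfun P 1 -> Z \in Lfun P 1 ->
  (fun w => (a * Y w + c * Z w + b)%R) \in Lfun P 1.
Proof.
move=> hY hZ.
have hY' : (a \o* Y) \in Lfun P 1 by apply: Lfun_scale => //; rewrite lexx.
have hZ' : (c \o* Z) \in Lfun P 1 by apply: Lfun_scale => //; rewrite lexx.
have E : (fun w => (a * Y w + c * Z w + b)%R) = (a \o* Y \+ c \o* Z) \+ cst b.
  by apply: boolp.funext => w /=; rewrite [Z w * c]mulrC [Y w * a]mulrC.
rewrite E; apply: rpredD; last exact: Lfun_cst.
by apply: rpredD.
Qed.

Lemma E_lin2 (Y Z : T -> R) (a c b : R) : Y \in Lfun P 1 -> Z \in Lfun P 1 ->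
  ('E_P[fun w => (a * Y w + c * Z w + b)%R] = a%:E * 'E_P[Y] + c%:E * 'E_P[Z] + b%:E)%E.
Proof.
move=> hY hZ.
have hY' : (a \o* Y) \in Lfun P 1 by apply: Lfun_scale => //; rewrite lexx.
have hZ' : (c \o* Z) \in Lfun P 1 by apply: Lfun_scale => //; rewrite lexx.
have E : (fun w => (a * Y w + c * Z w + b)%R) = (a \o* Y \+ c \o* Z) \+ cst b.
  by apply: boolp.funext => w /=; rewrite [Z w * c]mulrC [Y w * a]mulrC.
rewrite E expectationD; last exact: Lfun_cst.
  by rewrite expectationD // !expectationZl // expectation_cst.
by apply: rpredD.
Qed.
End E.


Lemma phi_bound (R : realType) (D eps z M : R) : 0 < D -> 0 < eps -> `|z| <= M ->
  `|phi D eps z| <= M^+2 / (2 * D).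
Proof.
move=> D0 e0 zM.
rewrite ger0_norm; last exact: phi_ge0.
rewrite /phi; case: (leP eps `|z|) => h.
  rewrite ler_pM2r; last by rewrite invr_gt0; lra.
  have n0 : 0 <= `|z| by [].
  nra.
by apply: divr_ge0; [exact: sqr_ge0 | lra].
Qed.

Lemma phi_zero (R : realType) (l eps z : R) : `|z| <= eps -> phi l eps z = 0.
Proof.
move=> h; rewrite /phi; case: (leP eps `|z|) => h2 //.
have -> : `|z| - eps = 0 by lra.
by rewrite expr0n /= mul0r.
Qed.

Theorem theorem4 (R : realType) (dsp : measure_display) (T : measurableType dsp)
  (P : probability T R) (th : {RV P >-> R})
  (u : R -> R -> R) (d lam eps pi0 pi2 p qmin qmax fstar : R)
  (qa : R -> R) (qb qc : R -> R -> R) :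
  (* theta has a continuous (atomless) distribution *)
  (forall x : R, P (th @^-1` [set x]) = 0%E) ->
  (* regularity: u(q, theta) integrable for every q *)
  (forall q : R, P.-integrable setT (fun w => (u q (th w))%:E)) ->
  (* d^2 u / dq^2 = -1/d everywhere *)
  0 < d ->
  (forall t q : R, derivable (fun x => u x t) q 1 /\
     derivable (derive1 (fun x => u x t)) q 1 /\
     derive1 (derive1 (fun x => u x t)) q = - d^-1) ->
  0 < lam -> 0 < eps -> 0 < pi0 -> 0 < pi2 -> 0 < p < 1 ->
  (* q^a, q^b, q^c are the argmins *)
  (forall t q : R, pi0 * qa t - u (qa t) t <= pi0 * q - u q t) ->
  (forall f t q : R, pi0 * qb f t - u (qb f t) t + phi lam eps (f - qb f t)
                     <= pi0 * q - u q t + phi lam eps (f - q)) ->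
  (forall f t q : R, pi0 * qc f t - u (qc f t) t - pi2 * (f - qc f t)
                     <= pi0 * q - u q t - pi2 * (f - q)) ->
  (* f* minimizes H *)
  (forall f : R, (Hcost P th u pi0 pi2 p lam eps qb qc fstar
                  <= Hcost P th u pi0 pi2 p lam eps qb qc f)%E) ->
  (forall t : R, qmin <= qa t <= qmax) ->
  (maxe (qmax%:E - 'E_P[qa \o th]) ('E_P[qa \o th] - qmin%:E) <= eps%:E)%E ->
  (fstar%:E - 'E_P[qa \o th] <= ((d + lam) * (p * pi2 / (1 - p)) + eps)%:E)%E /\
  (Hcost P th u pi0 pi2 p lam eps qb qc fstar
     <= 'E_P[fun w => (pi0 * qa (th w) - u (qa (th w)) (th w))%R])%E.
Proof.
move=> Hatom Hint d0 Hder l0 e0 pi00 pi20 /andP[p0 p1] Ha Hb Hc Hf Hq Hmax.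
have ua : forall q t, u q t = u 0 t + (u 1 t - u 0 t + d^-1/2) * q - d^-1/2 * q^+2.
  by move=> q t; exact: (@quad R (fun x => u x t) d^-1 (Hder t) q).
have qaE : forall t, qa t = d * ((u 1 t - u 0 t + d^-1/2) - pi0).
  move=> t; apply: (@argmin_q R d pi0 (u 0 t)) => // q.
  by have := Ha t q; rewrite (ua q t) (ua (qa t) t).
pose G := fun t => pi0 * qa t - u (qa t) t.
have key : forall q t, pi0 * q - u q t = G t + (q - qa t)^+2/(2*d).
  by move=> q t; rewrite /G (ua q t) (ua (qa t) t); apply: key_gen => //; exact: qaE.
have cE : forall f t, pi0 * qc f t - u (qc f t) t - pi2 * (f - qc f t)
    = G t + pi2 * qa t - d * pi2^+2/2 - pi2 * f.
  by move=> f t; have := Hc f t (qa t - d*pi2); rewrite !key => H; exact: c_gen.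
have bE : forall f t, pi0 * qb f t - u (qb f t) t + phi lam eps (f - qb f t)
    = G t + phi (d + lam) eps (f - qa t).
  move=> f t; rewrite key; apply/eqP; rewrite eq_le; apply/andP; split.
  - have [y Hy] := @phi_attain R lam d eps (f - qa t) l0 d0 e0.
    have := Hb f t (f - y); rewrite !key.
    rewrite (_ : f - (f - y) = y); last by ring.
    rewrite (_ : f - y - qa t = f - qa t - y); last by ring.
    rewrite -Hy; lra.
  - have := @phi_lb R lam d eps (f - qa t) (f - qb f t) l0 d0 e0.
    rewrite (_ : f - qa t - (f - qb f t) = qb f t - qa t); last by ring.
    lra.
pose X := fun w => qa (th w).
have mu : forall q, measurable_fun setT (fun w => u q (th w)).
  by move=> q; exact: (@Lfun_m R dsp T P _ (@Lfun_meas R dsp T P (fun w => u q (th w)) (Hint q))).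
have L0 : (fun w => u 0 (th w)) \in Lfun P 1 :=
  @Lfun_meas R dsp T P (fun w => u 0 (th w)) (Hint 0).
have mX : measurable_fun setT X.
  have -> : X = fun w => d * ((u 1 (th w) - u 0 (th w) + d^-1/2) - pi0).
    by apply: boolp.funext => w; rewrite /X qaE.
  have m1 := measurable_funB (mu 1) (mu 0).
  have m2 := measurable_funD m1 (measurable_cst (d^-1/2 : R)).
  have m3 := measurable_funB m2 (measurable_cst pi0).
  exact: (measurable_funM (measurable_cst d) m3).
pose Cq := `|qmin| + `|qmax|.
have XC : forall w, `|X w| <= Cq.
  move=> w; have /andP[h1 h2] := Hq (th w).
  have h3 := ler_norm qmax; have := ler_norm (- qmin); rewrite normrN => h4.
  have n1 : 0 <= `|qmin| by []. have n2 : 0 <= `|qmax| by [].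
  rewrite /Cq /X; case: (lerP 0 (qa (th w))) => hs;
    [rewrite [`|qa (th w)|]ger0_norm // | rewrite [`|qa (th w)|]ltr0_norm //]; lra.
have LX : X \in Lfun P 1 := @Lfun_bounded R dsp T P X Cq mX XC.
have LX2 : (fun w => X w ^+ 2) \in Lfun P 1.
  apply: (@Lfun_bounded R dsp T P _ (Cq ^+ 2)).
    exact: measurable_funX.
  move=> w; rewrite normrX; apply: lerXn2r; rewrite ?nnegrE //.
  exact: le_trans (XC w).
have GE : (fun w => G (th w)) = (fun w => ((-1) * u 0 (th w) + (- (2 * d)^-1) * X w ^+ 2 + 0)%R).
  apply: boolp.funext => w /=.
  have := key 0 (th w); rewrite /X => k0.
  have -> : G (th w) = - u 0 (th w) - (0 - qa (th w))^+2 / (2 * d) by lra.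
  rewrite sub0r sqrrN; ring.
have LG : (fun w => G (th w)) \in Lfun P 1.
  by rewrite GE; apply: Lfun_lin2.
pose Mf := fun f w => phi (d + lam) eps (f - X w).
have LM : forall f, Mf f \in Lfun P 1.
  move=> f; apply: (@Lfun_bounded R dsp T P _ ((`|f| + Cq)^+2 / (2 * (d + lam)))).
    apply: phiM; first lra.
    exact: (measurable_funB (measurable_cst f) mX).
  move=> w; apply: phi_bound => //; first lra.
  apply: le_trans (ler_normB _ _) _; rewrite lerD2l; exact: XC.
pose EG := fine ('E_P[fun w => G (th w)])%E.
pose EX := fine ('E_P[X])%E.
pose m := fun f => fine ('E_P[Mf f])%E.
have hEG : ('E_P[fun w => G (th w)] = EG%:E)%E by rewrite /EG E_fin.
have hEX : ('E_P[X] = EX%:E)%E by rewrite /EX E_fin.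
have hM : forall f, ('E_P[Mf f] = (m f)%:E)%E by move=> f; rewrite /m E_fin.
have HE : forall f, Hcost P th u pi0 pi2 p lam eps qb qc f =
    (p * (EG + pi2 * EX - d * pi2^+2/2 - pi2 * f) + (1 - p) * (EG + m f))%:E.
  move=> f; rewrite /Hcost.
  have e1 : (fun w => (pi0 * qc f (th w) - u (qc f (th w)) (th w) - pi2 * (f - qc f (th w)))%R)
      = (fun w => (1 * G (th w) + pi2 * X w + (- (d * pi2^+2/2) - pi2 * f))%R).
    by apply: boolp.funext => w; rewrite cE /X; ring.
  have e2 : (fun w => (pi0 * qb f (th w) - u (qb f (th w)) (th w) + phi lam eps (f - qb f (th w)))%R)
      = (fun w => (1 * G (th w) + 1 * Mf f w + 0)%R).
    by apply: boolp.funext => w; rewrite bE /Mf /X; ring.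
  rewrite e1 e2 !E_lin2 // hEG hEX hM.
  rewrite -!EFinM -!EFinD.
  congr EFin; ring.
have hEX' : ('E_P[qa \o th] = EX%:E)%E by exact: hEX.
rewrite hEX' in Hmax *.
move: Hmax; rewrite ge_max -!EFinB !lee_fin => /andP[Hm1 Hm2].
have pc : 0 <= p * (d * pi2^+2 / 2).
  apply: mulr_ge0; first lra.
  apply: mulr_ge0; last lra.
  by apply: mulr_ge0; [lra | exact: sqr_ge0].
split; last first.
  have hEG' : ('E_P[fun w => (pi0 * qa (th w) - u (qa (th w)) (th w))%R] = EG%:E)%E.
    exact: hEG.
  rewrite hEG'.
  have m0 : m EX = 0.
    rewrite /m; have -> : Mf EX = cst 0.
      apply: boolp.funext => w; rewrite /Mf phi_zero //.
      have /andP[h1 h2] := Hq (th w).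
      rewrite /X; case: (lerP 0 (EX - qa (th w))) => hs;
        [rewrite ger0_norm // | rewrite ltr0_norm //]; lra.
    by rewrite expectation_cst.
  apply: le_trans (Hf EX) _.
  rewrite HE m0 lee_fin.
  lra.
rewrite leNgt; apply/negP => Hgt.
have D0 : 0 < d + lam by lra.
set kk := p * pi2 / (1 - p) in Hgt.
pose h := (fstar - EX - ((d + lam) * kk + eps)) / 2.
have h0 : 0 < h by rewrite /h; lra.
have H1 := Hf (fstar - h); rewrite !HE lee_fin in H1.
have conv : h * (fstar - h - eps) / (d + lam) - h / (d + lam) * EX <= m fstar - m (fstar - h).
  have hle : ('E_P[fun w => (0 * X w + (- (h / (d + lam))) * X w + h * (fstar - h - eps) / (d + lam))%R]
       <= 'E_P[fun w => (1 * Mf fstar w + (-1) * Mf (fstar - h) w + 0)%R])%E.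
    apply: (@E_le R dsp T P).
    - exact: Lfun_lin2.
    - exact: Lfun_lin2.
    - move=> w; rewrite /Mf.
      have := @phi_conv R (d + lam) eps (fstar - X w) (fstar - h - X w) D0 e0 _.
      rewrite (_ : fstar - X w - (fstar - h - X w) = h); last by ring.
      have E : 0 * X w + - (h / (d + lam)) * X w + h * (fstar - h - eps) / (d + lam)
           = h * (fstar - h - X w - eps) / (d + lam) by field; lra.
      rewrite E => H; have := H _; lra.
  rewrite !E_lin2 // hEX !hM -!EFinM -!EFinD lee_fin in hle.
  lra.
have H2 : (1 - p) * (m fstar - m (fstar - h)) <= p * pi2 * h by lra.
have A1 : fstar - h - eps - EX = h + (d + lam) * kk by rewrite /h; lra.
have E3 : h * (fstar - h - eps) / (d + lam) - h / (d + lam) * EX = h * h / (d + lam) + h * kk.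
  have -> : h * (fstar - h - eps) / (d + lam) - h / (d + lam) * EX = h * (fstar - h - eps - EX) / (d + lam).
    by field; lra.
  by rewrite A1; field; lra.
have E4 : (1 - p) * kk = p * pi2 by rewrite /kk; field; lra.
have pos : 0 < (1 - p) * (h * h / (d + lam)).
  apply: mulr_gt0; first lra.
  by apply: divr_gt0 => //; apply: mulr_gt0.
have H3 : (1 - p) * (h * h / (d + lam) + h * kk) <= (1 - p) * (m fstar - m (fstar - h)).
  by rewrite ler_wpM2l //; [lra | rewrite -E3].
have E5 : (1 - p) * (h * h / (d + lam) + h * kk) = (1 - p) * (h * h / (d + lam)) + h * (p * pi2).
  by rewrite -E4; ring.
lra.
Qed.
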